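(* Let $h:\mathbb R\to\mathbb R$ be strictly increasing and continuous on $[0,1]$ and $\beta\in(0,1)$ with $\nu_k\le h(\beta^k)$ for all $k\in\mathbb N$ and $\{k:\nu_k>h(0)\}\neq\emptyset$. Let $\omega(s)=\min\{h(1),\max\{s,h(0)\}\}$ and $$V(x)=\sup_{k\in\mathbb N}\beta^{-k}\,h^{-1}_{[0,1]}\big(\omega(\varphi(T^k(x)))\big),\quad x\in\mathbb R^d.$$ Then $V$ is an Opt-Lyapunov function for $(X^{\rm in},T)$ (with $V\circ T\le\beta V$). Moreover the function $\hat h$ defined by $\hat h(s)=s-h(0)$ for $s\le h(0)$ and $\hat h(s)=h^{-1}_{[0,1]}(s)$ for $s\in(h(0),h(1)]$ (extended arbitrarily to $\mathbb R$) is an $(X^{\rm in},T,\varphi)$-certificate of compatibility for $V$; in particular $V$ is $(X^{\rm in},T,\varphi)$-compatible.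
   Context: Standing data: nonempty $X^{\rm in}\subseteq\mathbb R^d$, $T:\mathbb R^d\to\mathbb R^d$, $\varphi:\mathbb R^d\to\mathbb R$ with $\varphi(0)=0$, $\nu_k=\sup_{x\in X^{\rm in}}\varphi(T^k(x))$ finite for all $k$; $G^{>}_\nu=\{k:\nu_k>\limsup_n\nu_n\}$. $h^{-1}_{[0,1]}:[h(0),h(1)]\to[0,1]$ is the inverse of $h|_{[0,1]}$. An Opt-Lyapunov function for $(X^{\rm in},T)$ is $V:\mathbb R^d\to[0,+\infty]$ with $\sup_{X^{\rm in}}V\in(0,1]$ and $V\circ T\le\lambda V$ for some $\lambda\in(0,1)$. $I^\varphi=\overline{\operatorname{conv}}\{\varphi(T^k(x)):k\in\mathbb N,x\in X^{\rm in}\}$. $\mathrm{SC}$: functions $\alpha:\mathbb R\to\mathbb R$ with an interval $I$ such that $\alpha(I)=[0,1]$ and $\alpha$ strictly increasing continuous on $\operatorname{conv}(I^\varphi\cup I)$. An $(X^{\rm in},T,\varphi)$-certificate of compatibility for $g$ is $\alpha\in\mathrm{SC}$ with $\alpha(\nu_k)>0$ for some $k\in G^{>}_\nu$ and $\alpha(\varphi(T^k(x)))\le g(T^k(x))$ for all $k\in\mathbb N$, $x\in X^{\rm in}$. $g$ is $(X^{\rm in},T,\varphi)$-compatible if for some $k\in G^{>}_\nu$ there are $\varepsilon,\eta>0$ with: $x\in X^{\rm in}$, $j\in\mathbb N$, $\varphi(T^j(x))>\nu_k-\eta$ imply $g(T^j(x))>\varepsilon$. *)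

(* Defs.v *)
From HB Require Import structures.
From mathcomp Require Import all_boot all_order all_algebra.
From mathcomp Require Import all_classical all_reals all_analysis.
Set Implicit Arguments. Unset Strict Implicit. Unset Printing Implicit Defensive.
Import Order.TTheory GRing.Theory Num.Theory.
Import numFieldNormedType.Exports.
Local Open Scope classical_set_scope.
Local Open Scope ring_scope.

Section Defs.
Variables (R : realType) (d : nat).
Local Notation X := 'rV[R]_d.

Definition nu_e (Xin : set X) (T : X -> X) (phi : X -> R) (k : nat) : \bar R :=
  ereal_sup [set (phi (iter k T x))%:E | x in Xin].

(* real value of nu_k (meaningful under the finiteness hypothesis) *)
Definition nu (Xin : set X) (T : X -> X) (phi : X -> R) (k : nat) : R :=
  fine (nu_e Xin T phi k).

Definition Ggt (Xin : set X) (T : X -> X) (phi : X -> R) : set nat :=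
  [set k | limn_esup (fun n => (nu Xin T phi n)%:E) < (nu Xin T phi k)%:E]%E.

Definition hinv01 (h : R -> R) (s : R) : R :=
  xget 0 [set t | 0 <= t <= 1 /\ h t = s].

Definition omega (h : R -> R) (s : R) : R := Order.min (h 1) (Order.max s (h 0)).

Definition convR (S : set R) : set R :=
  [set t | exists a b, S a /\ S b /\ a <= t <= b].

Definition Iphi (Xin : set X) (T : X -> X) (phi : X -> R) : set R :=
  closure (convR [set phi (iter k T x) | k in [set: nat] & x in Xin]).

Definition SC (Xin : set X) (T : X -> X) (phi : X -> R) (alpha : R -> R) : Prop :=
  exists I : set R, is_interval I /\ alpha @` I = `[0, 1]%classic /\
    let D := convR (Iphi Xin T phi `|` I) in
    {in D &, forall x y, x < y -> alpha x < alpha y} /\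
    {within D, continuous alpha}.

Definition certificate (Xin : set X) (T : X -> X) (phi : X -> R)
  (g : X -> \bar R) (alpha : R -> R) : Prop :=
  SC Xin T phi alpha /\
  (exists k, Ggt Xin T phi k /\ 0 < alpha (nu Xin T phi k)) /\
  (forall k x, Xin x -> ((alpha (phi (iter k T x)))%:E <= g (iter k T x))%E).

Definition compatible (Xin : set X) (T : X -> X) (phi : X -> R)
  (g : X -> \bar R) : Prop :=
  exists k, Ggt Xin T phi k /\ exists eps eta : R, 0 < eps /\ 0 < eta /\
    forall x j, Xin x -> nu Xin T phi k - eta < phi (iter j T x) ->
      (eps%:E < g (iter j T x))%E.

Definition opt_lyapunov_with (Xin : set X) (T : X -> X) (V : X -> \bar R)
  (lam : R) : Prop :=
  0 < lam < 1 /\ (forall x, (0 <= V x)%E) /\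
  (0 < ereal_sup (V @` Xin) <= 1)%E /\
  (forall x, (V (T x) <= lam%:E * V x)%E).

Definition opt_lyapunov (Xin : set X) (T : X -> X) (V : X -> \bar R) : Prop :=
  exists lam, opt_lyapunov_with Xin T V lam.

Definition Vfun (T : X -> X) (phi : X -> R) (h : R -> R) (beta : R) (x : X)
  : \bar R :=
  ereal_sup [set ((beta ^- k) * hinv01 h (omega h (phi (iter k T x))))%:E
            | k in [set: nat]].

End Defs.

(* Main.v *)
Require Import Defs.
From HB Require Import structures.
From mathcomp Require Import all_boot all_order all_algebra.
From mathcomp Require Import all_classical all_reals all_analysis.
From mathcomp Require Import lra.
Import Order.TTheory GRing.Theory Num.Theory.
Import numFieldNormedType.Exports.
Local Open Scope classical_set_scope.
Local Open Scope ring_scope.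

Section HInv.
Context {R : realType} {h : R -> R}.
Hypothesis hinc : {in `[0, 1] &, forall s t, s < t -> h s < h t}.
Hypothesis hcont : {within `[0, 1], continuous h}.

Let i01 (t : R) : (t \in `[0, 1]) = (0 <= t <= 1).
Proof. by rewrite in_itv. Qed.

Lemma h01 : h 0 < h 1.
Proof. by apply: hinc; rewrite ?i01 ?lexx ?ler01 ?ltr01. Qed.

Lemma hle s t : 0 <= s -> t <= 1 -> s <= t -> h s <= h t.
Proof.
move=> s0 t1; rewrite le_eqVlt => /predU1P[->//|st].
apply/ltW/hinc => //; rewrite i01; apply/andP; split => //.
- by rewrite (le_trans (ltW st)).
- by rewrite (le_trans s0 (ltW st)).
Qed.

Lemma hinv_spec s : h 0 <= s <= h 1 ->
  (0 <= hinv01 h s <= 1) /\ h (hinv01 h s) = s.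
Proof.
move=> hs; rewrite /hinv01.
apply: (@xgetPex R 0 [set t | (0 <= t <= 1) /\ h t = s]).
have [c c01 hc] : exists2 c, c \in `[0, 1] & h c = s.
  apply: IVT; [exact: ler01 | exact: hcont |].
  by rewrite min_l ?max_r // ltW // h01.
by exists c; split => //; rewrite -i01.
Qed.

Lemma hinv_h t : 0 <= t <= 1 -> hinv01 h (h t) = t.
Proof.
move=> t01; apply: xget_unique => // y [y01 hy].
have [yt|ty|//] := ltgtP y t.
- by have := hinc y t; rewrite hy ltxx !i01 => /(_ y01 t01 yt).
- by have := hinc t y; rewrite hy ltxx !i01 => /(_ t01 y01 ty).
Qed.

Lemma hinv0 : hinv01 h (h 0) = 0.
Proof. by rewrite hinv_h // lexx ler01. Qed.

Lemma hinv_lt s s' : h 0 <= s -> s < s' -> s' <= h 1 -> hinv01 h s < hinv01 h s'.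
Proof.
move=> hs ss' s'h.
have [[a1 ha] [b1 hb]] : (0 <= hinv01 h s <= 1 /\ h (hinv01 h s) = s) /\
   (0 <= hinv01 h s' <= 1 /\ h (hinv01 h s') = s').
  split; apply: hinv_spec; apply/andP; split.
  - by []. - by rewrite (le_trans (ltW ss')).
  - by rewrite (le_trans hs (ltW ss')). - by [].
rewrite ltNge; apply/negP => le'.
have := hle (hinv01 h s') (hinv01 h s).
move: a1 b1 => /andP[a0 a1] /andP[b0 b1].
by move=> /(_ b0 a1 le'); rewrite ha hb leNgt ss'.
Qed.

Lemma hinv_le s s' : h 0 <= s -> s <= s' -> s' <= h 1 -> hinv01 h s <= hinv01 h s'.
Proof.
move=> hs; rewrite le_eqVlt => /predU1P[->//|ss'] s'h.
exact/ltW/hinv_lt.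
Qed.

Lemma hinv_ge0 s : h 0 <= s -> s <= h 1 -> 0 <= hinv01 h s.
Proof. by move=> a b; rewrite -hinv0 hinv_le. Qed.

Lemma hinv_gt0 s : h 0 < s -> s <= h 1 -> 0 < hinv01 h s.
Proof. by move=> a b; rewrite -hinv0 hinv_lt. Qed.

Lemma omega_ge s : h 0 <= omega h s.
Proof. by rewrite /omega le_min le_max lexx orbT ltW // h01. Qed.

Lemma omega_le s : omega h s <= h 1.
Proof. by rewrite /omega ge_min lexx. Qed.

Lemma omega_id s : h 0 <= s -> s <= h 1 -> omega h s = s.
Proof. by move=> a b; rewrite /omega max_l // min_r. Qed.

Lemma omega_low s : s <= h 0 -> omega h s = h 0.
Proof. by move=> a; rewrite /omega max_r // min_r // ltW // h01. Qed.

Lemma omega_lemax s : omega h s <= Order.max s (h 0).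
Proof. by rewrite /omega ge_min lexx orbT. Qed.

Lemma hinv_cont : {within `[h 0, h 1], continuous (hinv01 h)}.
Proof.
apply: (@segment_can_le_continuous _ 0 1 h (hinv01 h) ler01 hcont).
by move=> t; rewrite i01 => /hinv_h.
Qed.

End HInv.
Lemma comp_within (R : realType) (T : topologicalType) (f : R -> R) (A : set R)
  (g : T -> R) x :
  {within A, continuous f} -> (forall y, A (g y)) -> {for x, continuous g} ->
  {for x, continuous (f \o g)}.
Proof.
move=> fc gA gc.
have := (@subspace_continuousP _ A _ f).1 fc (g x) (gA x).
move=> H; apply: (cvg_trans _ H) => P /= WP.
have K := gc _ WP.
apply: (@filterS _ (nbhs x) _ (g @^-1` (fun t => A t -> (f @^-1` P) t)) _ _ K).
by move=> z /= /(_ (gA z)).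
Qed.

Lemma G_cont (R : realType) (h : R -> R) :
  {in `[0, 1] &, forall s t, s < t -> h s < h t} ->
  {within `[0, 1], continuous h} ->
  continuous (fun s => Order.min (s - h 0) 0 + hinv01 h (omega h s)).
Proof.
move=> hinc hcont x; apply: (@continuousD _ _ _ (fun s => Order.min (s - h 0) 0) (fun s => hinv01 h (omega h s))).
  apply: (@min_fun_continuous _ _ _ (fun s => s - h 0) (fun _ => 0)).
    by move=> y; apply: continuousB; [exact: cvg_id | exact: cvg_cst].
  by move=> y; exact: cvg_cst.
apply: (@comp_within _ _ (hinv01 h) `[h 0, h 1] (omega h)).
- exact: hinv_cont.
- by move=> y /=; rewrite in_itv /= omega_ge // omega_le.
- apply: (@min_fun_continuous _ _ _ (fun _ => h 1) (fun s => Order.max s (h 0))).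
    by move=> y; exact: cvg_cst.
  apply: (@max_fun_continuous _ _ _ id (fun _ => h 0)).
    by move=> y; exact: cvg_id.
  by move=> y; exact: cvg_cst.
Qed.

Lemma hb_cvg (R : realType) (h : R -> R) (beta : R) :
  {within `[0, 1], continuous h} -> 0 <= beta < 1 ->
  (fun n => h (beta ^+ n)) @ \oo --> h 0.
Proof.
move=> hcont /andP[b0 b1].
have H := (@subspace_continuousP _ (`[0, 1]%classic : set R) _ h).1 hcont 0.
have := H; rewrite /= in_itv /= lexx ler01 => /(_ isT) {}H.
apply: (cvg_trans _ H) => P /= WP.
have K := @cvg_expr R beta; rewrite ger0_norm // in K.
have {}K := K b1 _ WP.
apply: (@filterS _ \oo _ _ _ _ K) => n /=; apply.
by rewrite in_itv /= exprn_ge0 // exprn_ile1 // ltW.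
Qed.

Theorem mainTheorem19 (R : realType) (d : nat) (Xin : set 'rV[R]_d)
  (T : 'rV[R]_d -> 'rV[R]_d) (phi : 'rV[R]_d -> R) (h : R -> R) (beta : R) :
  Xin !=set0 ->
  phi 0 = 0 ->
  (forall k, nu_e Xin T phi k \is a fin_num) ->
  {in `[0, 1] &, forall s t, s < t -> h s < h t} ->
  {within `[0, 1], continuous h} ->
  0 < beta < 1 ->
  (forall k, nu Xin T phi k <= h (beta ^+ k)) ->
  (exists k, h 0 < nu Xin T phi k) ->
  let V := Vfun T phi h beta in
  [/\ opt_lyapunov Xin T V,
      (forall x, (V (T x) <= beta%:E * V x)%E),
      (forall hh : R -> R,
         (forall s, s <= h 0 -> hh s = s - h 0) ->
         (forall s, h 0 < s <= h 1 -> hh s = hinv01 h s) ->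
         certificate Xin T phi V hh)
    & compatible Xin T phi V].
Proof.
move=> _ _ fin hinc hcont /andP[b0 b1] nuh [k0 hk0] V.
have h01' := h01 hinc.
have b0' := ltW b0; have b1' := ltW b1.
have bk01 k : 0 <= beta ^+ k <= 1.
  by rewrite exprn_ge0 // exprn_ile1.
have hbk k : h 0 <= h (beta ^+ k) <= h 1.
  by have /andP[a b] := bk01 k; rewrite !hle.
have phi_nu k x : Xin x -> phi (iter k T x) <= nu Xin T phi k.
  move=> Xx; rewrite -lee_fin /nu fineK ?fin //.
  by apply: ereal_sup_ubound; exists x.
have nu_h1 k : nu Xin T phi k <= h 1.
  by apply: le_trans (nuh k) _; have /andP[] := hbk k.
have phi_h1 k x : Xin x -> phi (iter k T x) <= h 1.
  by move=> Xx; apply: le_trans (phi_nu k x Xx) (nu_h1 k).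
have ex_x k : h 0 < nu Xin T phi k ->
    exists x, Xin x /\ h 0 < phi (iter k T x).
  move=> hk; have : ((h 0)%:E < nu_e Xin T phi k)%E.
    by rewrite -(fineK (fin k)) lte_fin.
  by move=> /ereal_sup_gt[_ [x Xx <-]]; rewrite lte_fin => ?; exists x.
have Vge x k : (((beta ^- k) * hinv01 h (omega h (phi (iter k T x))))%:E
    <= V x)%E.
  by apply: ereal_sup_ubound; exists k.
have Vge0 x : ((hinv01 h (omega h (phi x)))%:E <= V x)%E.
  by have := Vge x 0%N; rewrite expr0 invr1 mul1r.
have hinv_om_ge0 s : 0 <= hinv01 h (omega h s).
  by rewrite hinv_ge0 ?omega_ge ?omega_le.
have V0 x : (0 <= V x)%E.
  by apply: le_trans (Vge0 x); rewrite lee_fin.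
have contr x : (V (T x) <= beta%:E * V x)%E.
  apply: ge_ereal_sup => _ [k _ <-]; rewrite -iterSr.
  have := Vge x k.+1.
  move=> /(lee_wpmul2l (x:=beta%:E)); rewrite lee_fin ltW // => /(_ isT).
  apply: le_trans; rewrite -EFinM lee_fin.
  rewrite exprS invfM !mulrA mulfV ?mul1r // gt_eqF //.
have hb := @hb_cvg _ h beta hcont (introT andP (conj b0' b1)) : (fun n => h (beta ^+ n)) @ \oo --> h 0.
have limsup_le : (limn_esup (fun n => (nu Xin T phi n)%:E) <= (h 0)%:E)%E.
  rewrite limn_esup_lim.
  have cv : esups (fun n => (h (beta ^+ n))%:E) @ \oo --> (h 0)%:E.
    apply: cvg_esups; apply: cvg_EFin; first exact: nearW.
    exact: hb.
  rewrite -(cvg_lim _ cv) //.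
  apply: lee_lim; [exact: is_cvg_esups|exact: is_cvg_esups|].
  apply: nearW => n; apply: ge_ereal_sup => _ [m /= nm <-].
  apply: (@le_trans _ _ (h (beta ^+ m))%:E); first by rewrite lee_fin.
  by apply: ereal_sup_ubound; exists m.
have Gk0 : Ggt Xin T phi k0.
  by rewrite /Ggt /=; apply: le_lt_trans limsup_le _; rewrite lte_fin.
split => //.
- exists beta; split => //; first by rewrite b0.
  split; first by move=> y; apply: V0.
  split; last by [].
  apply/andP; split.
    have [x [Xx hx]] := ex_x k0 hk0.
    apply: (@lt_le_trans _ _ (V x)); last by apply: ereal_sup_ubound; exists x.
    apply: lt_le_trans (Vge x k0); rewrite lte_fin mulr_gt0 //.
      by rewrite invr_gt0 exprn_gt0.
    by rewrite omega_id ?(ltW hx) ?phi_h1 // hinv_gt0 // phi_h1.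
  apply: ge_ereal_sup => _ [x Xx <-]; apply: ge_ereal_sup => _ [k _ <-].
  rewrite lee_fin.
  have Hk : hinv01 h (omega h (phi (iter k T x))) <= beta ^+ k.
    rewrite -[X in _ <= X](hinv_h hinc _ (bk01 k)).
    apply: hinv_le => //; first exact: omega_ge.
      apply: le_trans (omega_lemax _) _; rewrite ge_max.
      by rewrite (le_trans (phi_nu k x Xx)) // ?nuh //; have /andP[] := hbk k.
    by have /andP[] := hbk k.
  apply: (@le_trans _ _ ((beta ^- k) * beta ^+ k)).
    by rewrite ler_wpM2l // invr_ge0 exprn_ge0 // ltW.
  by rewrite mulVf // expf_neq0 // gt_eqF.
- move=> hh hhlow hhmid.
  have hh_le s : s <= h 1 -> hh s = Order.min (s - h 0) 0 + hinv01 h (omega h s).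
    move=> s1; have [s0|s0] := leP s (h 0).
      rewrite hhlow // omega_low // hinv0 // addr0 min_l //.
      by rewrite subr_le0.
    rewrite hhmid ?s0 // omega_id ?(ltW s0) // min_r ?add0r //.
    by rewrite subr_ge0 ltW.
  split; [|split].
  + exists `[h 0, h 1]%classic; split; first exact: interval_is_interval.
    split.
      apply/seteqP; split.
        move=> _ [s /= Is <-]; move: Is; rewrite /= !in_itv /= => /andP[a b].
        have [s0|s0] := leP s (h 0).
          have -> : s = h 0 by apply/le_anti; rewrite s0 a.
          by rewrite hhlow // subrr lexx ler01.
        rewrite hhmid ?s0 //.
        by have [] := hinv_spec hinc hcont s; rewrite ?a ?b ?s0.
      move=> t; rewrite /= in_itv /= => t01; exists (h t).
        by rewrite /= in_itv /=; move: t01 => /andP[? ?]; rewrite !hle.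
      have [->|t0] := eqVneq t 0; first by rewrite hhlow // subrr.
      have tpos : 0 < t by rewrite lt_def t0; case/andP: t01.
      rewrite hhmid ?hinv_h //.
      move: t01 => /andP[t0a t1a]; rewrite hle // andbT.
      by apply: hinc => //; rewrite in_itv /= ?lexx ?ler01 ?t0a ?t1a.
    set D := convR _.
    have Dle : forall s, D s -> s <= h 1.
      have Iphi_le : Iphi Xin T phi `<=` [set s | s <= h 1].
        have cv : convR [set phi (iter k T x) | k in [set: nat] & x in Xin]
            `<=` [set s | s <= h 1].
          move=> s [a [b [_ [[k _ [x Xx <-]] /andP[_ sb]]]]].
          by apply: le_trans sb (phi_h1 k x Xx).
        have := closureS cv; rewrite -(proj1 (closure_id _) (@closed_le _ (h 1))).
        by [].
      move=> s [a [b [_ [Ib /andP[_ sb]]]]]; apply: le_trans sb _.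
      case: Ib => [/Iphi_le //|]; by rewrite /= in_itv /= => /andP[].
    split.
      move=> x y; rewrite !in_setE => Dx Dy xy.
      have x1 := Dle x Dx; have y1 := Dle y Dy.
      have [y0|y0] := leP y (h 0).
        by rewrite !hhlow ?ltrD2r // (le_trans (ltW xy)).
      rewrite (hhmid y) ?y0 //.
      have [x0|x0] := leP x (h 0).
        rewrite hhlow //; apply: le_lt_trans (hinv_gt0 hinc hcont _ y0 y1).
        by rewrite subr_le0.
      by rewrite hhmid ?x0 // hinv_lt // ltW.
    apply: (@subspace_eq_continuous _ D _
      (from_subspace D (fun s => Order.min (s - h 0) 0 + hinv01 h (omega h s)))).
      by move=> s; rewrite in_setE => Ds; rewrite /from_subspace hh_le // Dle.
    exact/continuous_subspaceT/G_cont.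
  + exists k0; split => //; rewrite hhmid ?hk0 ?nu_h1 //.
    by rewrite hinv_gt0.
  + move=> k x Xx; apply: le_trans (Vge0 _); rewrite lee_fin.
    have [s0|s0] := leP (phi (iter k T x)) (h 0).
      by rewrite hhlow // (le_trans _ (hinv_om_ge0 _)) // subr_le0.
    by rewrite hhmid ?s0 ?phi_h1 // omega_id ?phi_h1 // ltW.
- set m := (nu Xin T phi k0 + h 0) / 2.
  have hm : h 0 < m by rewrite /m; lra.
  have m1 : m <= h 1 by have := nu_h1 k0; rewrite /m; lra.
  have hm0 := hinv_gt0 hinc hcont _ hm m1.
  exists k0; split => //; exists (hinv01 h m / 2), ((nu Xin T phi k0 - h 0) / 2).
  split; first by rewrite divr_gt0.
  split; first by rewrite divr_gt0 // subr_gt0.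
  move=> x j Xx hx.
  have mx : m < phi (iter j T x) by move: hx; rewrite /m; lra.
  apply: lt_le_trans (Vge0 _); rewrite lte_fin.
  rewrite omega_id ?phi_h1 ?(le_trans (ltW hm) (ltW mx)) //.
  apply: (@lt_le_trans _ _ (hinv01 h m)); first by lra.
  by apply: (hinv_le hinc hcont); [exact: ltW hm | exact: ltW mx | exact: phi_h1 _ _ Xx].
Qed.
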